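(* Let $X$ be a Hausdorff space. Assume there is $K\in\mathcal{K}(X)$ such that every clopen subset $U$ of $X$ with $K\subset U$ satisfies $U=X$. Then $\mathcal{C}=\{K\cup\{x\}:x\in X\}$ is a connected subset of $\mathcal{K}(X)$.
   Context: $\mathcal{K}(X)$ is the set of nonempty compact subsets of $X$ with the Vietoris topology (generated by $U^+=\{A: A\subset U\}$ and $U^-=\{A: A\cap U\neq\emptyset\}$ for $U$ open in $X$). *)

(* Defs.v *)
From HB Require Import structures.
From mathcomp Require Import all_boot all_order all_algebra.
From mathcomp Require Import all_classical all_reals all_analysis.
Set Implicit Arguments. Unset Strict Implicit. Unset Printing Implicit Defensive.
Local Open Scope classical_set_scope.

(* The hyperspace of X: subsets of X, with the Vietoris topology generated by
   the subbase  U^+ = [set A | A `<=` U]  and  U^- = [set A | A `&` U !=set0]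
   for U open in X.  The space K(X) of nonempty compact subsets carries the
   subspace topology of this space (same subbase, restricted). *)
Definition vietoris (X : topologicalType) : Type := set X.

Definition upper_set (X : topologicalType) (U : set X) : set (vietoris X) :=
  [set A : set X | A `<=` U].
Definition lower_set (X : topologicalType) (U : set X) : set (vietoris X) :=
  [set A : set X | A `&` U !=set0].

Definition vietoris_subbase_index (X : topologicalType) : set (bool * set X) :=
  [set p | open p.2].
Definition vietoris_subbase (X : topologicalType) (p : bool * set X)
  : set (vietoris X) :=
  if p.1 then upper_set p.2 else lower_set p.2.

HB.instance Definition _ (X : topologicalType) := Choice.on (vietoris X).
HB.instance Definition _ (X : topologicalType) :=
  isSubBaseTopological.Build (vietoris X)
    (@vietoris_subbase_index X) (@vietoris_subbase X).

Definition hyperK (X : topologicalType) : set (vietoris X) :=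
  [set A : set X | A !=set0 /\ compact A].

(* Main.v *)
Require Import Defs.
From HB Require Import structures.
From mathcomp Require Import all_boot all_order all_algebra.
From mathcomp Require Import all_classical all_reals all_analysis.
Local Open Scope classical_set_scope.

Lemma open_bigcap_seq (T : topologicalType) (I : eqType) (s : seq I)
  (g : I -> set T) :
  (forall i, i \in s -> open (g i)) ->
  open (\bigcap_(i in [set i | i \in s]) g i).
Proof.
elim: s => [|a s IH] H.
  rewrite (_ : \bigcap_(i in _) g i = setT); first exact: openT.
  by apply/seteqP; split => // x _ i /=; rewrite in_nil.
rewrite (_ : \bigcap_(i in _) g i =
   g a `&` \bigcap_(i in [set i | i \in s]) g i).
  apply: openI; first by apply: H; rewrite mem_head.
  by apply: IH => i si; apply: H; rewrite in_cons si orbT.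
apply/seteqP; split => x /=.
  move=> h; split; first by apply: h; rewrite /= mem_head.
  by move=> i /= si; apply: h; rewrite /= in_cons si orbT.
by move=> [ga h] i /=; rewrite in_cons => /orP [/eqP -> //|si]; exact: h.
Qed.

Lemma pre_open (X : topologicalType) (K : set X) (O : set (vietoris X)) :
  open O -> open ((fun x : X => (K `|` [set x] : vietoris X)) @^-1` O).
Proof.
move=> [D' sD' <-].
rewrite preimage_bigcup; apply: bigcup_open => W /sD' [F sF <-].
rewrite preimage_bigcap.
apply: (@open_bigcap_seq _ _ (finmap.enum_fset F)) => -[b U] /= Fi.
have oU : open U by have := sF (b, U) Fi; rewrite inE.
rewrite /vietoris_subbase /=.
case: b {Fi} => /=.
  have [KU|nKU] := pselect (K `<=` U).
    rewrite (_ : _ @^-1` _ = U) //; apply/seteqP; split => x /=.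
      by move=> h; apply: h; right.
    by move=> Ux y [/KU //|-> //].
  rewrite (_ : _ @^-1` _ = set0); first exact: open0.
  by apply/seteqP; split => x //= h; apply: nKU => y Ky; apply: h; left.
have [[z [Kz Uz]]|nKU] := pselect (K `&` U !=set0).
  rewrite (_ : _ @^-1` _ = setT); first exact: openT.
  by apply/seteqP; split => x // _; exists z; split => //; left.
rewrite (_ : _ @^-1` _ = U) //; apply/seteqP; split => x /=.
  move=> [y [[Ky|->] Uy]] //; exfalso; apply: nKU; by exists y.
by move=> Ux; exists x; split => //; right.
Qed.

Theorem lemma5p1 (X : topologicalType) (K : set X) :
  hausdorff_space X ->
  @hyperK X K ->
  (forall U : set X, clopen U -> K `<=` U -> U = setT) ->
  let C : set (vietoris X) := (fun x : X => (K `|` [set x] : vietoris X)) @` setT in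
  C `<=` @hyperK X /\ connected C.
Proof.
move=> _ [[k Kk] cK] hK C.
set f := (fun x : X => (K `|` [set x] : vietoris X)).
have fK : forall y, K y -> f y = K.
  by move=> y Ky; apply/seteqP; split => z; [case => // ->|left].
split.
  move=> _ [x _ <-]; split; first by exists x; right.
  by apply: compactU => //; exact: compact_set1.
move=> B [b Bb] [Op oO BO] [Fc cF BF].
pose A := f @^-1` Op.
have AF : A = f @^-1` Fc.
  apply/seteqP; split => x /= h.
    have : B (f x) by rewrite BO; split => //; exists x.
    by rewrite BF => -[].
  have : B (f x) by rewrite BF; split => //; exists x.
  by rewrite BO => -[].
have clA : clopen A.
  split; first exact: pre_open.
  rewrite AF -[Fc]setCK preimage_setC; apply: open_closedC.
  by have := @pre_open X K (~` Fc); rewrite openC; apply.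
have [BK|nBK] := pselect (B K).
  have AT : A = setT.
    apply: hK => // y Ky; rewrite /A /= fK //.
    by move: BK; rewrite BO => -[].
  apply/seteqP; split; first by rewrite BO => z [].
  move=> _ [x _ <-]; rewrite BO; split; first by exists x.
  by have : A x by rewrite AT.
exfalso.
have ACT : ~` A = setT.
  apply: hK; first exact: clopenC.
  move=> y Ky; rewrite /A /= fK // => OK; apply: nBK.
  by rewrite BO; split => //; exists k => //; exact: fK.
have := Bb; rewrite BO => -[[x _ <-] Ofx].
by have : (~` A) x by rewrite ACT.
Qed.
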